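(* Let $K$ be a finite simplicial complex with an orientation $\sigma$ and a weight function $w$, and let $i\ge 0$. Then $$\lambda_{\max}(\mathcal L_i^{up}(K))\le \lambda_{\max}(\mathcal Q_i^{up}(K)),$$ with equality if $(B_i(K),\sigma)$ is balanced. If moreover $B_i(K)$ is connected (i.e. $K$ is $(i+1)$-path connected in the paper's sense), then equality holds if and only if $(B_i(K),\sigma)$ is balanced.
   Context: A simplicial complex $K$ is a family of subsets of a finite vertex set closed under subsets, containing $\emptyset$; $S_j(K)$ is the set of faces of cardinality $j+1$. An orientation assigns to each face an ordering of its vertices up to even permutations. For an oriented $(i+1)$-face $[\bar F]=[v_0,\dots,v_{i+1}]$ and an oriented $i$-face $[F]$, $\mathrm{sgn}([F],\partial[\bar F])=\pm(-1)^j$ if $F=\bar F\setminus\{v_j\}$ (sign $+$ iff $[F]$ has the orientation $[v_0,\dots,\hat v_j,\dots,v_{i+1}]$), and $0$ if $F\not\subset \bar F$. A weight function $w:K\to\mathbb R_{>0}$ gives diagonal matrices $W_j=\mathrm{diag}(w(F))_{F\in S_j(K)}$. $D_i$ is the $S_{i+1}(K)\times S_i(K)$ matrix with entries $\mathrm{sgn}([F],\partial[\bar F])$. The $i$-up Laplacian is $\mathcal L_i^{up}(K)=W_i^{-1}D_i^\top W_{i+1}D_i$ and the $i$-up signless Laplacian is $\mathcal Q_i^{up}(K)=W_i^{-1}|D_i|^\top W_{i+1}|D_i|$, where $|A|$ is the entrywise absolute value. Both have real spectra (they are self-adjoint w.r.t. the inner product $\sum_F w(F)f(F)g(F)$), and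 $\lambda_{\max}$ denotes the largest eigenvalue. The incidence graph $B_i(K)$ is the bipartite graph on $S_i(K)\cup S_{i+1}(K)$ with edges $\{F,\bar F\}$ for $F\subset\bar F$, signed by $\mathrm{sgn}([F],\partial[\bar F])$. A signed graph is balanced if every cycle has positive sign (product of its edge signs). *)

(* Defs.v *)
From HB Require Import structures.
From mathcomp Require Import all_boot all_order all_algebra.
From mathcomp Require Import reals.

Set Implicit Arguments.
Unset Strict Implicit.
Unset Printing Implicit Defensive.

Import Order.TTheory GRing.Theory Num.Theory.
Local Open Scope ring_scope.

Section SimplicialDefs.
Variable V : finType.

Definition simplicial_complex (K : {set {set V}}) : Prop :=
  set0 \in K /\ forall F G : {set V}, F \in K -> G \subset F -> G \in K.

Definition S (K : {set {set V}}) (j : nat) : {set {set V}} :=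
  [set F in K | #|F| == j.+1].

(* An orientation is given by choosing, for each face, an ordering of its
   vertices (a duplicate-free list enumerating it); two orderings give the same
   orientation iff they differ by an even permutation. *)
Definition orientation (K : {set {set V}}) (o : {set V} -> seq V) : Prop :=
  forall F, F \in K -> perm_eq (o F) (enum F).

(* Two orderings of the same finite set represent the same
   orientation iff their inversion counts have the same parity. *)
Fixpoint inv_count (s : seq V) : nat :=
  match s with
  | [::] => 0
  | x :: s' => (count (fun y => enum_rank y < enum_rank x) s' + inv_count s')%N
  end.

(* sgn([F], d[Fb]) for the orientation o: if [Fb] = [v_0,...,v_{i+1}] (the list
   o Fb) and F = Fb \ {v_j}, this is (-1)^j, times +1 iff [F] (the list o F)
   has the orientation of [v_0,...,^v_j,...,v_{i+1}] (the list o Fb with v_j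
   removed), and -1 otherwise; it is 0 if F is not a codimension-1 face of Fb. *)
Definition sgn (R : numDomainType) (o : {set V} -> seq V) (F Fb : {set V}) : R :=
  if (F \subset Fb) && (#|Fb| == #|F|.+1) then
    (-1) ^+ (find (fun x => x \notin F) (o Fb)) *
    (-1) ^+ (odd (inv_count (o F)) (+) odd (inv_count [seq x <- o Fb | x \in F]))
  else 0.

Definition face (K : {set {set V}}) (j : nat) (k : 'I_#|S K j|) : {set V} :=
  enum_val k.

Variable R : realType.

Definition Wmx (K : {set {set V}}) (w : {set V} -> R) (j : nat)
  : 'M[R]_#|S K j| :=
  diag_mx (\row_k w (face k)).

Definition Dmx (K : {set {set V}}) (o : {set V} -> seq V) (i : nat)
  : 'M[R]_(#|S K i.+1|, #|S K i|) :=
  \matrix_(a, b) sgn R o (face b) (face a).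

Definition Lup (K : {set {set V}}) (o : {set V} -> seq V) (w : {set V} -> R)
  (i : nat) : 'M[R]_#|S K i| :=
  invmx (Wmx K w i) *m (Dmx K o i)^T *m Wmx K w i.+1 *m Dmx K o i.

Definition Qup (K : {set {set V}}) (o : {set V} -> seq V) (w : {set V} -> R)
  (i : nat) : 'M[R]_#|S K i| :=
  let aD := map_mx (fun x : R => `|x|) (Dmx K o i) in
  invmx (Wmx K w i) *m aD^T *m Wmx K w i.+1 *m aD.

Definition is_lambda_max (n : nat) (M : 'M[R]_n) (l : R) : Prop :=
  eigenvalue M l /\ forall m, eigenvalue M m -> m <= l.

End SimplicialDefs.

Section IncidenceGraph.
Variable V : finType.

Definition B_adj (K : {set {set V}}) (i : nat) : rel {set V} :=
  fun F G =>
    [&& F \in S K i, G \in S K i.+1 & F \subset G] ||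
    [&& G \in S K i, F \in S K i.+1 & G \subset F].

Definition B_sign (R : numDomainType) (o : {set V} -> seq V) (F G : {set V}) : R :=
  if (#|F| < #|G|)%N then sgn R o F G else sgn R o G F.

Definition cycle_sign (R : numDomainType) (o : {set V} -> seq V) (c : seq {set V}) : R :=
  \prod_(p <- zip c (rot 1 c)) B_sign R o p.1 p.2.

Definition balanced (R : numDomainType) (K : {set {set V}}) (o : {set V} -> seq V)
  (i : nat) : Prop :=
  forall c : seq {set V}, uniq c -> (3 <= size c)%N -> cycle (B_adj K i) c ->
    0 < cycle_sign R o c.

Definition B_connected (K : {set {set V}}) (i : nat) : Prop :=
  forall F G, F \in S K i :|: S K i.+1 -> G \in S K i :|: S K i.+1 ->
    connect (B_adj K i) F G.

End IncidenceGraph.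

(* Main.v *)
Require Import Defs.
From HB Require Import structures.
From mathcomp Require Import all_boot all_order all_algebra.
From mathcomp Require Import reals.
From mathcomp Require Import ring lra zify.
From mathcomp Require Import boolp classical_sets topology normedtype derive.
Require Import Defs.
Import Order.TTheory GRing.Theory Num.Theory.
Import numFieldNormedType.Exports.
Set Implicit Arguments.
Unset Strict Implicit.
Unset Printing Implicit Defensive.
Local Open Scope ring_scope.
Local Open Scope classical_set_scope.

Section Cont.
Variables (R : realType) (n : nat).

Lemma cont_sum (I : Type) (r : seq I) (f : I -> 'rV[R]_n -> R) :
  (forall a, continuous (f a)) -> continuous (fun g => \sum_(a <- r) f a g).
Proof.
move=> hf; elim: r => [|a r IH].
  under eq_fun do rewrite big_nil; exact: cst_continuous.
under eq_fun do rewrite big_cons.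
by move=> x; apply: continuousD; [exact: hf| exact: IH].
Qed.

Lemma contM (f h : 'rV[R]_n -> R) : continuous f -> continuous h ->
  continuous (fun x => f x * h x).
Proof. move=> hf hh x. exact: (@continuousM _ _ f h x (hf x) (hh x)). Qed.

Lemma contC (a : 'I_1) (b : 'I_n) : continuous (fun g : 'rV[R]_n => g a b).
Proof. exact: coord_continuous. Qed.

Definition qf (A : 'M[R]_n) (g : 'rV[R]_n) :=
  \sum_a \sum_c g ord0 a * A a c * g ord0 c.
Definition nuf (d : 'I_n -> R) (g : 'rV[R]_n) := \sum_a d a * g ord0 a ^+ 2.

Lemma qf_cont A : continuous (qf A).
Proof.
apply: cont_sum => a; apply: cont_sum => c.
apply: contM; last exact: contC.
apply: contM; first exact: contC.
exact: cst_continuous.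
Qed.

Lemma nuf_cont d : continuous (nuf d).
Proof.
apply: cont_sum => a; apply: contM; first exact: cst_continuous.
under eq_fun do rewrite expr2.
by apply: contM; exact: contC.
Qed.

Lemma qmax (A : 'M[R]_n) (d : 'I_n -> R) : (forall a, 0 < d a) -> (0 < n)%N ->
  exists2 u : 'rV[R]_n, nuf d u = 1 &
    forall g, nuf d g = 1 -> qf A g <= qf A u.
Proof.
move=> hd n0.
pose c a := 1 + (d a)^-1.
pose box := [set v : 'rV[R]_n | forall a, `[- c a, c a]%classic (v ord0 a)].
pose C := box `&` (nuf d @^-1` [set 1]).
have hbox g : nuf d g = 1 -> box g.
  move=> hg a; rewrite /= in_itv /= -ler_norml.
  have : d a * g ord0 a ^+ 2 <= 1.
    rewrite -hg /nuf (bigD1 a) //= lerDl sumr_ge0 // => b _.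
    by rewrite mulr_ge0 ?sqr_ge0 // ltW.
  have da := hd a; rewrite /c.
  rewrite -ler_pdivlMl // mulr1 => h.
  have : `|g ord0 a| ^+ 2 <= (d a)^-1 by rewrite real_normK ?num_real.
  have : 0 <= `|g ord0 a| by [].
  have : 0 < (d a)^-1 by rewrite invr_gt0.
  move: `|g ord0 a| ((d a)^-1) => x y. nra.
have cC : compact C.
  apply: compact_closedI.
    apply: (@rV_compact _ n (fun a => `[- c a, c a]%classic)) => a; exact: segment_compact.
  have := @nuf_cont d; move/continuous_closedP; apply.
  exact: closed_eq.
have C0 : C !=set0.
  pose a0 : 'I_n := Ordinal n0.
  exists (\row_a (if a == a0 then Num.sqrt ((d a0)^-1) else 0)).
  suff h : nuf d (\row_a (if a == a0 then Num.sqrt ((d a0)^-1) else 0)) = 1.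
    by split => //; exact: hbox.
  rewrite /nuf (bigD1 a0) //= big1 => [|b /negbTE hb]; last by rewrite mxE hb expr0n mulr0.
  rewrite mxE eqxx sqr_sqrtr ?invr_ge0 ?ltW // divff ?addr0 //.
  by apply/lt0r_neq0.
have [u uC umax] := EVT_max_rV C0 cC (continuous_subspaceT (@qf_cont A)).
exists u; first by move: uC; rewrite inE => -[].
move=> g hg; apply: umax; rewrite inE; split => //; exact: hbox.
Qed.

Definition bf (A : 'M[R]_n) (x v : 'rV[R]_n) :=
  \sum_a \sum_c x ord0 a * A a c * v ord0 c.
Definition mf (d : 'I_n -> R) (x v : 'rV[R]_n) := \sum_a d a * (x ord0 a * v ord0 a).

Lemma qf_bf A g : qf A g = bf A g g. Proof. by []. Qed.
Lemma nuf_mf d g : nuf d g = mf d g g.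
Proof. by apply: eq_bigr => a _; rewrite expr2. Qed.

Lemma bf_sym A x v : A^T = A -> bf A v x = bf A x v.
Proof.
move=> hA; rewrite /bf exchange_big /=; apply: eq_bigr => a _; apply: eq_bigr => c _.
have -> : A c a = A a c by rewrite -[in LHS]hA mxE.
ring.
Qed.

Lemma bf_exp A x v t : bf A (x + t *: v) (x + t *: v) =
  bf A x x + t * (bf A x v + bf A v x) + t ^+ 2 * bf A v v.
Proof.
rewrite /bf mulrDr !mulr_sumr -!big_split /=; apply: eq_bigr => a _.
rewrite !mulr_sumr -!big_split /=; apply: eq_bigr => c _.
rewrite !mxE; ring.
Qed.

Lemma mf_exp d x v t : mf d (x + t *: v) (x + t *: v) =
  mf d x x + t * (mf d x v + mf d v x) + t ^+ 2 * mf d v v.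
Proof.
rewrite /mf mulrDr !mulr_sumr -!big_split /=; apply: eq_bigr => a _.
rewrite !mxE; ring.
Qed.

Lemma quad_zero (b p : R) : 0 <= p -> (forall t, 0 <= 2 * t * b + t ^+ 2 * p) -> b = 0.
Proof.
move=> p0 h; have := h (- b / (p + 1)).
have hp1 : 0 < p + 1 by rewrite ltr_wpDl.
set u := (p + 1)^-1.
have hu : u * (p + 1) = 1 by rewrite mulVf // gt_eqF.
have u0 : 0 < u by rewrite invr_gt0.
rewrite mulNr => H.
have hup : u * p = 1 - u by rewrite -hu; ring.
have H2 : b ^+ 2 * (u * (1 + u)) <= 0.
  have -> : b ^+ 2 * (u * (1 + u)) = - (2 * (- (b * u)) * b + (- (b * u)) ^+ 2 * p).
    have -> : (- (b * u)) ^+ 2 * p = b ^+ 2 * u * (u * p) by ring.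
    rewrite hup; ring.
  by rewrite oppr_le0.
have : b ^+ 2 <= 0.
  by move: H2; rewrite pmulr_lle0 // mulr_gt0 // ltr_wpDr // ltW.
move=> hb; apply/eqP; rewrite -sqrf_eq0 eq_le hb sqr_ge0 //.
Qed.
End Cont.

Section Ray.
Variables (R : realType) (n : nat).
Local Notation qf := (@qf R n).
Local Notation nuf := (@nuf R n).
Local Notation bf := (@bf R n).
Local Notation mf := (@mf R n).

Lemma qfZ A t g : qf A (t *: g) = t ^+ 2 * qf A g.
Proof.
rewrite /qf mulr_sumr; apply: eq_bigr => a _; rewrite mulr_sumr.
by apply: eq_bigr => c _; rewrite !mxE; ring.
Qed.

Lemma nufZ d t g : nuf d (t *: g) = t ^+ 2 * nuf d g.
Proof.
rewrite /nuf mulr_sumr; apply: eq_bigr => a _; rewrite !mxE; ring.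
Qed.

Lemma nuf_ge0 d g : (forall a, 0 < d a) -> 0 <= nuf d g.
Proof. by move=> hd; apply: sumr_ge0 => a _; rewrite mulr_ge0 ?sqr_ge0 // ltW. Qed.

Lemma nuf_eq0 d g : (forall a, 0 < d a) -> nuf d g = 0 -> g = 0.
Proof.
move=> hd /eqP; rewrite psumr_eq0 => [/allP h|a _]; last first.
  by rewrite mulr_ge0 ?sqr_ge0 // ltW.
apply/rowP => a; rewrite mxE.
have := h a (mem_index_enum a); rewrite /=.
by rewrite mulf_eq0 gt_eqF //= sqrf_eq0 => /eqP.
Qed.

Lemma qf0 A : qf A 0 = 0.
Proof. by rewrite /qf big1 // => a _; rewrite big1 // => c _; rewrite mxE !mul0r. Qed.

Lemma rq_bound A d (r : R) : (forall a, 0 < d a) ->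
  (forall g, nuf d g = 1 -> qf A g <= r) -> forall g, qf A g <= r * nuf d g.
Proof.
move=> hd hmax g.
have [h0 | nz] := eqVneq (nuf d g) 0.
  by rewrite h0 mulr0 (nuf_eq0 hd h0) qf0.
have pos : 0 < nuf d g by rewrite lt0r nz nuf_ge0.
set t := (Num.sqrt (nuf d g))^-1.
have ht2 : t ^+ 2 = (nuf d g)^-1 by rewrite exprVn sqr_sqrtr // ltW.
have := hmax (t *: g); rewrite nufZ qfZ ht2 mulVf // => /(_ erefl).
by rewrite ler_pdivrMl // mulrC.
Qed.

Lemma kernel_lemma A d (r : R) (x : 'rV[R]_n) : (forall a, 0 < d a) -> A^T = A ->
  (forall g, qf A g <= r * nuf d g) -> qf A x = r * nuf d x ->
  forall j, \sum_a x ord0 a * A a j = r * (d j * x ord0 j).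
Proof.
move=> hd hA hb hx j.
pose v : 'rV[R]_n := \row_a (a == j)%:R.
pose P g := r * nuf d g - qf A g.
have Pge g : 0 <= P g by rewrite subr_ge0.
have hmf : mf d x v = d j * x ord0 j.
  rewrite /mf (bigD1 j) //= big1 => [|a /negbTE ha]; last by rewrite mxE ha !mulr0.
  by rewrite mxE eqxx mulr1 addr0.
have hbf : bf A x v = \sum_a x ord0 a * A a j.
  apply: eq_bigr => a _; rewrite (bigD1 j) //= big1 => [|c /negbTE hc]; last by rewrite mxE hc !mulr0.
  by rewrite mxE eqxx mulr1 addr0.
have key : forall t, 0 <= 2 * t * (r * mf d x v - bf A x v) + t ^+ 2 * P v.
  move=> t; have := Pge (x + t *: v).
  rewrite /P nuf_mf qf_bf mf_exp bf_exp (bf_sym x v hA).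
  have -> : mf d v x = mf d x v. rewrite /mf. apply: eq_bigr => a _. by rewrite (mulrC (v _ _)). 
  rewrite -nuf_mf -qf_bf -nuf_mf -qf_bf.
  have -> : r * (nuf d x + t * (mf d x v + mf d x v) + t ^+ 2 * nuf d v) -
    (qf A x + t * (bf A x v + bf A x v) + t ^+ 2 * qf A v) =
    (r * nuf d x - qf A x) + (2 * t * (r * mf d x v - bf A x v) + t ^+ 2 * P v).
    rewrite /P; ring.
  by rewrite hx subrr add0r.
have := quad_zero (Pge v) key.
by rewrite hmf hbf => /eqP; rewrite subr_eq0 => /eqP ->.
Qed.
End Ray.

Section Ray2.
Variables (R : realType).


Lemma rayleigh n (A : 'M[R]_n) (d : 'I_n -> R) (hd : forall a, 0 < d a)
  (hA : A^T = A) lam (hl : is_lambda_max (invmx (diag_mx (\row_a d a)) *m A) lam) :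
  [/\ forall g, qf A g <= lam * nuf d g,
     exists2 y : 'rV_n, y != 0 & qf A y = lam * nuf d y &
     forall g, qf A g = lam * nuf d g ->
       forall j, \sum_a g ord0 a * A a j = lam * (d j * g ord0 j)].
Proof.
set W := diag_mx (\row_a d a).
have Wu : W \in unitmx.
  rewrite unitmxE det_diag unitfE; apply/prodf_neq0 => a _; rewrite mxE gt_eqF //.
have Went (g : 'rV_n) j : (g *m W) ord0 j = g ord0 j * d j by rewrite mul_mx_diag !mxE.
have eigE (y : 'rV_n) c : y *m A = c *: (y *m W) <->
    forall j, \sum_a y ord0 a * A a j = c * (d j * y ord0 j).
  split.
    move=> h j; have := congr1 (fun M : 'rV_n => M ord0 j) h => /=.
    by rewrite [in X in X -> _]mxE [in X in _ = X -> _]mxE Went (mulrC (d j)).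
  move=> h; apply/rowP => j; rewrite [LHS]mxE [RHS]mxE Went h (mulrC (d j)) //.
have qf_eig (y : 'rV_n) c : (forall j, \sum_a y ord0 a * A a j = c * (d j * y ord0 j)) ->
    qf A y = c * nuf d y.
  move=> h; rewrite /qf exchange_big /= /nuf mulr_sumr; apply: eq_bigr => j _.
  rewrite -mulr_suml h; ring.
have ev_to c : eigenvalue (invmx W *m A) c -> exists2 y : 'rV_n, y != 0 &
    forall j, \sum_a y ord0 a * A a j = c * (d j * y ord0 j).
  move/eigenvalueP => [v hv vn0]; exists (v *m invmx W).
    apply: contraNneq vn0 => h; by rewrite -(mulmxKV Wu v) h mul0mx.
  apply/eigE; rewrite mulmxKV // -mulmxA hv //.
have to_ev c (y : 'rV_n) : y != 0 ->
    (forall j, \sum_a y ord0 a * A a j = c * (d j * y ord0 j)) ->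
    eigenvalue (invmx W *m A) c.
  move=> yn0 /eigE h; apply/eigenvalueP; exists (y *m W).
    by rewrite mulmxA mulmxK // h.
  apply: contraNneq yn0 => h0; by rewrite -(mulmxK Wu y) h0 mul0mx.
have [y0 y0n0 hy0] := ev_to _ hl.1.
have n0 : (0 < n)%N.
  case: (pickP (fun j : 'I_n => y0 ord0 j != 0)) => [j _|h].
    exact: (leq_ltn_trans (leq0n j) (ltn_ord j)).
  by case/eqP: y0n0; apply/rowP => j; rewrite mxE; move/negbFE/eqP: (h j).
have [u hu umax] := qmax A hd n0.
set r := qf A u.
have bnd := rq_bound hd umax.
have ur : qf A u = r * nuf d u by rewrite hu mulr1.
have ker := kernel_lemma hd hA bnd.
have un0 : u != 0.
  apply: contra_eq_neq hu => ->; rewrite /nuf big1 => [|a _].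
    by rewrite eq_sym oner_neq0.
  by rewrite mxE expr0n mulr0.
have rl : r <= lam := hl.2 _ (to_ev _ _ un0 (ker _ ur)).
have lr : lam <= r.
  have := bnd y0; rewrite (qf_eig _ _ hy0) ler_pM2r //.
  by rewrite lt0r nuf_ge0 // andbT; apply: contra y0n0 => /eqP /(nuf_eq0 hd) ->.
have rE : r = lam by apply: le_anti; rewrite rl lr.
split.
- by rewrite -rE.
- by exists y0 => //; exact: qf_eig.
- move=> g hg; rewrite -rE; apply: ker.
  by rewrite hg -rE.
Qed.
End Ray2.

Local Close Scope classical_set_scope.

Section Graph.
Variables (V : finType) (R : realType) (K : {set {set V}}) (o : {set V} -> seq V) (i : nat).
Local Notation e := (B_adj K i).
Local Notation Bs := (B_sign R o).

Lemma S_card j X : X \in S K j -> #|X| = j.+1.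
Proof. by rewrite inE => /andP[_ /eqP]. Qed.

Lemma S_K j X : X \in S K j -> X \in K.
Proof. by rewrite inE => /andP[]. Qed.

Lemma sgn_sq (F Fb : {set V}) : sgn R o F Fb ^+ 2 =
  ((F \subset Fb) && (#|Fb| == #|F|.+1))%:R.
Proof.
rewrite /sgn; case: ifP => _; last by rewrite expr0n.
by rewrite exprMn !sqrr_sign mulr1.
Qed.

Lemma sgn0 (F Fb : {set V}) : ~~ ((F \subset Fb) && (#|Fb| == #|F|.+1)) -> sgn R o F Fb = 0.
Proof. by rewrite /sgn => /negbTE ->. Qed.

Lemma B_adj_sym x y : e x y = e y x.
Proof. by rewrite /B_adj orbC. Qed.

Lemma B_sign_sym x y : Bs x y = Bs y x.
Proof.
rewrite /B_sign; case: (ltngtP #|x| #|y|) => // h.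
by rewrite !sgn0 // h eqn_leq ltnn ?andbF.
Qed.

Lemma B_adj_cases x y : e x y ->
  [/\ x \in S K i, y \in S K i.+1 & x \subset y] \/
  [/\ y \in S K i, x \in S K i.+1 & y \subset x].
Proof. by case/orP => /and3P[*]; [left|right]. Qed.

Lemma B_sign_edge x y : e x y -> Bs x y ^+ 2 = 1.
Proof.
wlog: x y / [/\ x \in S K i, y \in S K i.+1 & x \subset y].
  move=> H /B_adj_cases [h|h]; first by apply: H => //; rewrite /B_adj; case: h => -> -> ->.
  by rewrite B_sign_sym; apply: H => //; rewrite /B_adj; case: h => -> -> ->.
case=> hx hy sxy _; rewrite /B_sign (S_card hx) (S_card hy) ltnSn sgn_sq sxy.
by rewrite (S_card hx) (S_card hy) eqxx.
Qed.

Lemma B_adj_irr x : ~~ e x x.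
Proof.
apply/negP => /B_adj_cases [] [h1 h2 _]; by move: (S_card h1) (S_card h2) => ->; rewrite -[X in _ = X -> _]addn1 => /eqP; rewrite -{1}(addn0 i.+1) eqn_add2l.
Qed.

Fixpoint psign (x : {set V}) (p : seq {set V}) : R :=
  if p is y :: p' then Bs x y * psign y p' else 1.

Lemma cycle_sign_psign x s : cycle_sign R o (x :: s) = psign x (rcons s x).
Proof.
rewrite /cycle_sign rot1_cons.
suff gen : forall x z s, \prod_(p <- zip (x :: s) (rcons s z)) Bs p.1 p.2 = psign x (rcons s z) by [].
move=> {}x z {}s; elim: s x => [|y s IH] x /=; first by rewrite big_cons big_nil.
by rewrite big_cons /= IH.
Qed.

Lemma psign_cat x p q : psign x (p ++ q) = psign x p * psign (last x p) q.
Proof. by elim: p x => [|y p IH] x /=; rewrite ?mul1r // IH mulrA. Qed.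

Lemma psign_rcons x p z : psign x (rcons p z) = psign x p * Bs (last x p) z.
Proof. by rewrite -cats1 psign_cat /= mulr1. Qed.

Lemma psign_rev x p : psign x p = psign (last x p) (rev (belast x p)).
Proof.
elim/last_ind: p => [|p z IH] //=.
rewrite psign_rcons last_rcons belast_rcons (lastI x p) rev_rcons /= -IH.
by rewrite B_sign_sym mulrC.
Qed.

Lemma not_uniq_split (T : eqType) (s : seq T) : ~~ uniq s ->
  exists s1 y s2 s3, s = s1 ++ y :: s2 ++ y :: s3.
Proof.
elim: s => [|z s IH] //=; rewrite negb_and negbK; case: (boolP (z \in s)) => [hz _|_ /= hu].
  by case/splitPr: hz => p1 p2; exists [::], z, p1, p2.
by have [s1 [y [s2 [s3 ->]]]] := IH hu; exists (z :: s1), y, s2, s3.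
Qed.

Lemma psign_edge_sq x p : path e x p -> psign x p ^+ 2 = 1.
Proof.
elim: p x => [|y p IH] x /=; first by rewrite expr1n.
by case/andP => hxy hp; rewrite exprMn B_sign_edge // IH // mulr1.
Qed.

Lemma closed_walk_pos : balanced R K o i ->
  forall x p, path e x p -> last x p = x -> 0 < psign x p.
Proof.
move=> hbal x p; have [k] := ubnP (size p); elim: k x p => // k IH x p hk.
case/lastP: p hk => [|s z] hk; first by rewrite ltr01.
rewrite last_rcons => hp hz; subst z.
case: (boolP (uniq (x :: s))) => hu.
  case: s hk hp hu => [|y [|y' s]] hk hp hu.
  - by move: hp => /= /andP[/negP]; rewrite (negbTE (B_adj_irr x)).
  - move: hp => /= /and3P[hxy _ _]; rewrite mulr1 /= B_sign_sym -expr2.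
    by rewrite B_sign_sym B_sign_edge ?ltr01 // B_adj_sym.
  - rewrite -cycle_sign_psign; apply: hbal => //.
move: hu; rewrite /= negb_and negbK; case: (boolP (x \in s)) => [hx _|_ /= hu].
  case/splitPr: hx hk hp => s1 s2 hk hp.
  rewrite rcons_cat /= -cat_rcons psign_cat last_rcons.
  move: hp; rewrite rcons_cat -cat_rcons cat_path last_rcons => /andP[h1 h2].
  move: hk; rewrite size_rcons size_cat /= => hk. idtac.
  apply: mulr_gt0; apply: IH => //; rewrite ?last_rcons //; rewrite size_rcons; lia.
have [s1 [y [s2 [s3 hs]]]] := not_uniq_split hu; subst s.
move: hp hk; rewrite !rcons_cat /= !rcons_cat /=.
rewrite -cat_rcons cat_path last_rcons /= -cat_rcons cat_path last_rcons.
case/and3P=> h1 h2 h3 hk.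
rewrite psign_cat last_rcons psign_cat last_rcons.
have hW1 : 0 < psign x (rcons s1 y ++ rcons s3 x).
  apply: IH; rewrite ?cat_path ?last_cat ?last_rcons ?h1 ?h3 //.
  move: hk; rewrite !size_cat !size_rcons => hk; lia.
have hW2 : 0 < psign y (rcons s2 y).
  apply: IH; rewrite ?last_rcons //.
  move: hk; rewrite !size_cat !size_rcons => hk; lia.
move: hW1; rewrite psign_cat last_rcons => hW1.
have e1 : psign x (rcons s1 y) * (psign y (rcons s2 y) * psign y (rcons s3 x)) =
  psign y (rcons s2 y) * (psign x (rcons s1 y) * psign y (rcons s3 x)) by ring.
by rewrite e1 mulr_gt0.
Qed.

Lemma last_rev_belast (x : {set V}) p : last (last x p) (rev (belast x p)) = x.
Proof.
have := congr1 rev (lastI x p); rewrite rev_rcons rev_cons => h.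
have := congr1 (last x) h; rewrite last_rcons /= => H.
exact: esym H.
Qed.

Lemma pos_sq1 (P : R) : 0 < P -> P ^+ 2 = 1 -> P = 1.
Proof.
move=> hP /eqP; rewrite sqrf_eq1 => /orP[/eqP //|/eqP h].
by move: hP; rewrite h ltr0N1.
Qed.

Lemma switching : balanced R K o i -> exists s : {set V} -> R,
  (forall x, s x ^+ 2 = 1) /\ (forall x y, e x y -> Bs x y = s x * s y).
Proof.
move=> hbal.
have symE : symmetric e by move=> x y; exact: B_adj_sym.
have csym := sym_connect_sym symE.
have ex x : exists p, path e x p && (last x p == fingraph.root e x).
  by case/connectP: (connect_root e x) => p hp hl; exists p; rewrite hp -hl eqxx.
pose wk x := xchoose (ex x).
have wkP x : path e x (wk x) && (last x (wk x) == fingraph.root e x) := xchooseP (ex x).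
exists (fun x => psign x (wk x)); split.
  by move=> x; apply: psign_edge_sq; case/andP: (wkP x).
move=> x y hxy.
have /(fingraph.rootP csym) rxy := connect1 hxy.
case/andP: (wkP x) => hp /eqP lp; case/andP: (wkP y) => hq /eqP lq.
set p := wk x in hp lp *; set q := wk y in hq lq *.
set t := y :: q ++ rev (belast x p).
have ht : path e x t.
  rewrite /t /= hxy cat_path hq /= lq -rxy -lp rev_path.
  by rewrite (@eq_path _ _ e) // => a b; rewrite /= symE.
have lt : last x t = x by rewrite /t /= last_cat lq -rxy -lp last_rev_belast.
have := closed_walk_pos hbal ht lt.
rewrite /t /= psign_cat lq -rxy -lp -psign_rev.
set sx := psign x p; set sy := psign y q => hP.
have sx2 : sx ^+ 2 = 1 by apply: psign_edge_sq.
have sy2 : sy ^+ 2 = 1 by apply: psign_edge_sq.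
have P1 : Bs x y * (sy * sx) = 1.
  apply: pos_sq1 => //; rewrite !exprMn sx2 sy2 B_sign_edge // !mulr1 //.
have -> : Bs x y = Bs x y * (sy ^+ 2 * sx ^+ 2) by rewrite sx2 sy2 !mulr1.
have -> : Bs x y * (sy ^+ 2 * sx ^+ 2) = (Bs x y * (sy * sx)) * (sx * sy) by ring.
by rewrite P1 mul1r.
Qed.

Lemma switch_cycle (s : {set V} -> R) : (forall x, s x ^+ 2 = 1) ->
  (forall x y, e x y -> Bs x y = s x * s y) -> balanced R K o i.
Proof.
move=> s2 hs c _ _.
have gen x p : path e x p -> psign x p = s x * s (last x p).
  elim: p x => [|y p IH] x /=; first by rewrite -expr2 s2.
  case/andP => hxy hp; rewrite hs // IH //.
  have -> : s x * s y * (s y * s (last y p)) = s x * s (last y p) * s y ^+ 2 by ring.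
  by rewrite s2 mulr1.
case: c => [|x c] hc; first by rewrite /cycle_sign /= big_nil ltr01.
rewrite cycle_sign_psign gen // last_rcons -expr2 s2 ltr01 //.
Qed.
End Graph.

Section MxLemmas.
Variable R : realType.

Lemma DWD_entry m n (D : 'M[R]_(m, n)) (e : 'I_m -> R) a c :
  (D^T *m diag_mx (\row_b e b) *m D) a c = \sum_b D b a * e b * D b c.
Proof. by rewrite mxE; apply: eq_bigr => b _; rewrite mul_mx_diag !mxE. Qed.

Lemma DWD_sym m n (D : 'M[R]_(m, n)) (e : 'I_m -> R) :
  (D^T *m diag_mx (\row_b e b) *m D)^T = D^T *m diag_mx (\row_b e b) *m D.
Proof. by rewrite !trmx_mul trmxK tr_diag_mx mulmxA. Qed.

Lemma qf_DWD m n (D : 'M[R]_(m, n)) (e : 'I_m -> R) (g : 'rV[R]_n) :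
  qf (D^T *m diag_mx (\row_b e b) *m D) g =
  \sum_b e b * (\sum_a D b a * g ord0 a) ^+ 2.
Proof.
rewrite /qf.
transitivity (\sum_a \sum_c \sum_b e b * ((D b a * g ord0 a) * (D b c * g ord0 c))).
  apply: eq_bigr => a _; apply: eq_bigr => c _; rewrite DWD_entry mulr_sumr mulr_suml.
  by apply: eq_bigr => b _; ring.
under eq_bigr do rewrite exchange_big.
rewrite exchange_big; apply: eq_bigr => b _.
rewrite expr2 mulr_suml mulr_sumr; apply: eq_bigr => a _.
by rewrite mulr_sumr mulr_sumr; apply: eq_bigr => c _.
Qed.

Lemma nuf_abs n (d : 'I_n -> R) (g : 'rV[R]_n) :
  nuf d (map_mx (fun x => `|x|) g) = nuf d g.
Proof. by apply: eq_bigr => a _; rewrite mxE real_normK ?num_real. Qed.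

Lemma abs_sq01 (x : R) (b : bool) : x ^+ 2 = b%:R -> `|x| = b%:R.
Proof.
case: b => h.
  apply/eqP; rewrite -sqrp_eq1 // real_normK ?num_real // h //.
by move/eqP: h; rewrite sqrf_eq0 => /eqP ->; rewrite normr0.
Qed.

Definition sg (x : R) : R := if 0 <= x then 1 else -1.

Lemma sg_sq x : sg x ^+ 2 = 1.
Proof. by rewrite /sg; case: ifP => _; rewrite ?sqrrN expr1n. Qed.

Lemma sg_mul x : sg x * x = `|x|.
Proof.
rewrite /sg; case: ifP => h; first by rewrite mul1r ger0_norm.
by rewrite mulN1r ltr0_norm // ltNge h.
Qed.

Lemma sg_le x y : sg x * y <= `|y|.
Proof.
rewrite /sg; case: ifP => _; first by rewrite mul1r ler_norm.
by rewrite mulN1r -normrN ler_norm.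
Qed.
End MxLemmas.

Section Main.
Variables (V : finType) (R : realType) (K : {set {set V}}) (o : {set V} -> seq V)
  (w : {set V} -> R) (i : nat).
Hypothesis hw : forall F, F \in K -> 0 < w F.

Local Notation n := #|S K i|.
Local Notation m := #|S K i.+1|.
Local Notation D := (Dmx R K o i).
Local Notation fa := (@face V K i).
Local Notation fb := (@face V K i.+1).

Definition dd (a : 'I_n) := w (fa a).
Definition ee (b : 'I_m) := w (fb b).
Definition aD := map_mx (fun x : R => `|x|) D.
Definition AL := D^T *m diag_mx (\row_b ee b) *m D.
Definition AQ := aD^T *m diag_mx (\row_b ee b) *m aD.

Lemma dd_pos a : 0 < dd a. Proof. exact/hw/(S_K (enum_valP a)). Qed.
Lemma ee_pos b : 0 < ee b. Proof. exact/hw/(S_K (enum_valP b)). Qed.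

Lemma fa_card a : #|fa a| = i.+1. Proof. exact: S_card (enum_valP a). Qed.
Lemma fb_card b : #|fb b| = i.+2. Proof. exact: S_card (enum_valP b). Qed.

Lemma D_sq a b : D b a ^+ 2 = (fa a \subset fb b)%:R.
Proof. by rewrite mxE sgn_sq fa_card fb_card eqxx andbT. Qed.

Lemma D_abs a b : `|D b a| = (fa a \subset fb b)%:R.
Proof. exact/abs_sq01/D_sq. Qed.

Lemma D_zero a b : ~~ (fa a \subset fb b) -> D b a = 0.
Proof. by move/negbTE => h; apply/eqP; rewrite -sqrf_eq0 D_sq h. Qed.

Lemma B_adj_face a b : B_adj K i (fa a) (fb b) = (fa a \subset fb b).
Proof.
rewrite /B_adj (enum_valP a) (enum_valP b) /=.
have -> : (fb b \in S K i) = false by rewrite inE fb_card (gtn_eqF (ltnSn _)) andbF.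
by rewrite orbF.
Qed.

Lemma B_sign_face a b : B_sign R o (fa a) (fb b) = D b a.
Proof. by rewrite /B_sign fa_card fb_card ltnSn mxE. Qed.

Lemma ex_fa X : X \in S K i -> exists a, fa a = X.
Proof. by move=> hX; exists (enum_rank_in hX X); rewrite /face enum_rankK_in. Qed.

Lemma ex_fb X : X \in S K i.+1 -> exists b, fb b = X.
Proof. by move=> hX; exists (enum_rank_in hX X); rewrite /face enum_rankK_in. Qed.

Lemma LupE : Lup K o w i = invmx (diag_mx (\row_a dd a)) *m AL.
Proof. by rewrite /Lup /AL !mulmxA. Qed.

Lemma QupE : Qup K o w i = invmx (diag_mx (\row_a dd a)) *m AQ.
Proof. by rewrite /Qup /AQ !mulmxA. Qed.

Lemma qfL g : qf AL g = \sum_b ee b * (\sum_a D b a * g ord0 a) ^+ 2.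
Proof. exact: qf_DWD. Qed.

Lemma qfQ g : qf AQ g = \sum_b ee b * (\sum_a `|D b a| * g ord0 a) ^+ 2.
Proof. by rewrite /AQ qf_DWD; apply: eq_bigr => b _; congr (_ * _ ^+ 2); apply: eq_bigr => a _; rewrite mxE. Qed.

Lemma AQ_entry c a : AQ c a = \sum_b `|D b c| * ee b * `|D b a|.
Proof. by rewrite /AQ DWD_entry; apply: eq_bigr => b _; rewrite !mxE. Qed.

Lemma termle (g : 'rV[R]_n) b :
  (\sum_a D b a * g ord0 a) ^+ 2 <= (\sum_a `|D b a| * `|g ord0 a|) ^+ 2.
Proof.
set T := \sum_a _; set U := \sum_a _.
have hU : `|T| <= U.
  apply: le_trans (ler_norm_sum _ _ _) _.
  by apply: ler_sum => a _; rewrite normrM.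
rewrite -real_normK ?num_real //.
have := normr_ge0 T; move: hU; move: `|T| => x; nra.
Qed.

Lemma qfQ_abs (g : 'rV[R]_n) : qf AQ (map_mx (fun x => `|x|) g) =
  \sum_b ee b * (\sum_a `|D b a| * `|g ord0 a|) ^+ 2.
Proof.
rewrite qfQ; apply: eq_bigr => b _; congr (_ * _ ^+ 2).
by apply: eq_bigr => a _; rewrite [X in _ * X]mxE.
Qed.

Lemma L_le_Q (g : 'rV[R]_n) : qf AL g <= qf AQ (map_mx (fun x => `|x|) g).
Proof.
rewrite qfL qfQ_abs; apply: ler_sum => b _; rewrite ler_pM2l ?ee_pos //; exact: termle.
Qed.

Lemma nuf_pos (g : 'rV[R]_n) : g != 0 -> 0 < nuf dd g.
Proof.
move=> gn0; rewrite lt0r nuf_ge0 ?andbT; last exact: dd_pos.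
by apply: contra gn0 => /eqP /(nuf_eq0 dd_pos) ->.
Qed.

Variables (lL lQ : R).
Hypothesis hL : is_lambda_max (Lup K o w i) lL.
Hypothesis hQ : is_lambda_max (Qup K o w i) lQ.

Lemma rayL : [/\ forall g, qf AL g <= lL * nuf dd g,
     exists2 y : 'rV_n, y != 0 & qf AL y = lL * nuf dd y &
     forall g, qf AL g = lL * nuf dd g ->
       forall j, \sum_a g ord0 a * AL a j = lL * (dd j * g ord0 j)].
Proof. by apply: rayleigh; [exact: dd_pos | exact: DWD_sym | rewrite -LupE]. Qed.

Lemma rayQ : [/\ forall g, qf AQ g <= lQ * nuf dd g,
     exists2 y : 'rV_n, y != 0 & qf AQ y = lQ * nuf dd y &
     forall g, qf AQ g = lQ * nuf dd g ->
       forall j, \sum_a g ord0 a * AQ a j = lQ * (dd j * g ord0 j)].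
Proof. by apply: rayleigh; [exact: dd_pos | exact: DWD_sym | rewrite -QupE]. Qed.

Lemma part1 : lL <= lQ.
Proof.
have [_ [y yn0 hy] _] := rayL; have [Q1 _ _] := rayQ.
have := le_trans (L_le_Q y) (Q1 _); rewrite hy nuf_abs.
by rewrite ler_pM2r // nuf_pos.
Qed.

Lemma part2 : balanced R K o i -> lQ <= lL.
Proof.
move=> hbal; have [s [s2 hs]] := switching hbal.
have [L1 _ _] := rayL; have [_ [y yn0 hy] _] := rayQ.
pose y' : 'rV[R]_n := \row_a (s (fa a) * y ord0 a).
have y'E a : y' ord0 a = s (fa a) * y ord0 a by rewrite mxE.
have key b : \sum_a D b a * y' ord0 a = s (fb b) * \sum_a `|D b a| * y ord0 a.
  rewrite mulr_sumr; apply: eq_bigr => a _; rewrite y'E.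
  case: (boolP (fa a \subset fb b)) => h.
    rewrite D_abs h mul1r.
    have := hs _ _ (etrans (B_adj_face a b) h); rewrite B_sign_face => ->.
    have -> : s (fa a) * s (fb b) * (s (fa a) * y ord0 a) =
      s (fa a) ^+ 2 * (s (fb b) * y ord0 a) by ring.
    by rewrite s2 mul1r.
  by rewrite D_zero // normr0 !mul0r mulr0.
have e1 : qf AL y' = qf AQ y.
  rewrite qfL qfQ; apply: eq_bigr => b _; by rewrite key exprMn s2 mul1r.
have e2 : nuf dd y' = nuf dd y.
  by apply: eq_bigr => a _; rewrite y'E exprMn s2 mul1r.
have := L1 y'; rewrite e1 e2 hy.
by rewrite ler_pM2r // nuf_pos.
Qed.
Lemma part3 : B_connected K i -> lL = lQ -> balanced R K o i.
Proof.
move=> hconn hLQ.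
have [_ [y yn0 hy] _] := rayL; have [Q1 _ Q3] := rayQ.
have ayE a : map_mx (fun x => `|x|) y ord0 a = `|y ord0 a| by rewrite mxE.
have eqQ : qf AQ (map_mx (fun x => `|x|) y) = lQ * nuf dd (map_mx (fun x => `|x|) y).
  apply: le_anti; rewrite Q1 /= nuf_abs -hLQ -hy L_le_Q //.
have eig := Q3 _ eqQ.
pose T b := \sum_a D b a * y ord0 a.
pose U b := \sum_a `|D b a| * `|y ord0 a|.
have hUT b : U b ^+ 2 = T b ^+ 2.
  have h0 : \sum_b ee b * (U b ^+ 2 - T b ^+ 2) = 0.
    have <- : qf AQ (map_mx (fun x => `|x|) y) - qf AL y = \sum_b ee b * (U b ^+ 2 - T b ^+ 2).
      by rewrite qfQ_abs qfL -sumrB; apply: eq_bigr => b' _; rewrite mulrBr.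
    by rewrite eqQ hy nuf_abs hLQ subrr.
  have hnn : forall b', true -> 0 <= ee b' * (U b' ^+ 2 - T b' ^+ 2).
    by move=> b' _; rewrite mulr_ge0 ?subr_ge0 ?termle // ltW // ee_pos.
  move/eqP: (psumr_eq0P hnn h0 (i:=b) isT).
  by rewrite mulf_eq0 gt_eqF ?ee_pos //= subr_eq0 => /eqP.
have zero_prop j0 : y ord0 j0 = 0 -> forall c (Fb : {set V}), Fb \in S K i.+1 ->
    fa j0 \subset Fb -> fa c \subset Fb -> y ord0 c = 0.
  move=> hj0 c Fb hFb h1 h2; have [b hb] := ex_fb hFb; subst Fb.
  have := eig j0; rewrite ayE hj0 normr0 !mulr0 => hsum.
  have hnn : forall c', true -> 0 <= map_mx (fun x => `|x|) y ord0 c' * AQ c' j0.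
    move=> c' _; rewrite ayE mulr_ge0 // AQ_entry; apply: sumr_ge0 => b' _.
    by rewrite !mulr_ge0 // ltW // ee_pos.
  move: (psumr_eq0P hnn hsum (i:=c) isT).
  rewrite ayE => /eqP; rewrite mulf_eq0 normr_eq0 => /orP[/eqP //|].
  rewrite AQ_entry psumr_eq0 => [/allP /(_ b (mem_index_enum b))|b' _]; last first.
    by rewrite !mulr_ge0 // ltW // ee_pos.
  by rewrite /= !D_abs h1 h2 mul1r mulr1 gt_eqF // ee_pos.
pose Z X := if X \in S K i then (forall a, fa a = X -> y ord0 a = 0)
            else (forall c, fa c \subset X -> y ord0 c = 0).
have notSi b : (fb b \in S K i) = false.
  by rewrite inE fb_card (gtn_eqF (ltnSn _)) andbF.
have step X Y : Z X -> B_adj K i X Y -> Z Y.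
  move=> hZ /B_adj_cases [[hX hY hXY]|[hY hX hYX]].
  - have [a ha] := ex_fa hX; have [b hb] := ex_fb hY; subst X Y.
    rewrite /Z notSi => c hc; move: hZ; rewrite /Z (enum_valP a) => /(_ a erefl) ha0.
    exact: (zero_prop a ha0 c _ (enum_valP b) hXY hc).
  - have [b hb] := ex_fb hX; subst X.
    move: hZ; rewrite /Z notSi hY => hZ a ha; apply: hZ; by rewrite ha.
have pathZ p X : Z X -> path (B_adj K i) X p -> Z (last X p).
  elim: p X => [|Y p IH] X //= hZ /andP[hXY hp]; apply: IH hp; exact: step hZ hXY.
have ynz a : y ord0 a != 0.
  apply/negP => /eqP ha.
  move/negP: yn0; apply; apply/eqP/rowP => c; rewrite mxE.
  have hZ0 : Z (fa a) by rewrite /Z (enum_valP a) => a' /enum_val_inj ->.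
  have /connectP [p hp hl] : connect (B_adj K i) (fa a) (fa c).
    by apply: hconn; rewrite finset.in_setU ?(enum_valP a) ?(enum_valP c).
  have := pathZ p _ hZ0 hp; rewrite -hl /Z (enum_valP c).
  by move/(_ c erefl).
have core a b : fa a \subset fb b -> D b a = sg (T b) * sg (y ord0 a).
  move=> hab.
  have hU : U b = `|T b|.
    apply/eqP; rewrite -(@eqrXn2 _ 2) //; last by apply: sumr_ge0 => c _; rewrite mulr_ge0.
    by rewrite hUT real_normK ?num_real.
  have h0 : \sum_c (`|D b c| * `|y ord0 c| - sg (T b) * (D b c * y ord0 c)) = 0.
    by rewrite sumrB -/(U b) -mulr_sumr -/(T b) hU sg_mul subrr.
  have hnn : forall c, true -> 0 <= `|D b c| * `|y ord0 c| - sg (T b) * (D b c * y ord0 c).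
    by move=> c _; rewrite subr_ge0 -normrM sg_le.
  move: (psumr_eq0P hnn h0 (i:=a) isT).
  move/eqP; rewrite subr_eq0 D_abs hab mul1r -sg_mul => /eqP h.
  have h2 : sg (y ord0 a) = sg (T b) * D b a.
    by apply: (mulIf (ynz a)); rewrite h mulrA.
  by rewrite h2 mulrA -expr2 sg_sq mul1r.
pose s (X : {set V}) : R :=
  if [pick a | fa a == X] is Some a then sg (y ord0 a)
  else if [pick b | fb b == X] is Some b then sg (T b) else 1.
have s_fa a : s (fa a) = sg (y ord0 a).
  rewrite /s; case: pickP => [a' /eqP /enum_val_inj -> //|/(_ a)].
  by rewrite eqxx.
have s_fb b : s (fb b) = sg (T b).
  rewrite /s; case: pickP => [a' /eqP h|_].
    by have := enum_valP a'; rewrite -[enum_val a']/(fa a') h notSi.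
  case: pickP => [b' /eqP /enum_val_inj -> //|/(_ b)].
  by rewrite eqxx.
have s2 X : s X ^+ 2 = 1.
  by rewrite /s; case: pickP => [*|_]; [|case: pickP => [*|_]]; rewrite ?sg_sq ?expr1n.
apply: (switch_cycle s2) => X Y /B_adj_cases [[hX hY hXY]|[hY hX hYX]].
  have [a ha] := ex_fa hX; have [b hb] := ex_fb hY; subst X Y.
  by rewrite B_sign_face core // s_fa s_fb mulrC.
have [a ha] := ex_fa hY; have [b hb] := ex_fb hX; subst X Y.
by rewrite B_sign_sym B_sign_face core // s_fa s_fb.
Qed.
End Main.

Theorem mainTheorem2 (V : finType) (R : realType) (K : {set {set V}})
  (o : {set V} -> seq V) (w : {set V} -> R) (i : nat)
  (hK : simplicial_complex K) (ho : orientation K o)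
  (hw : forall F, F \in K -> 0 < w F)
  (lL lQ : R)
  (hL : is_lambda_max (Lup K o w i) lL)
  (hQ : is_lambda_max (Qup K o w i) lQ) :
  [/\ lL <= lQ,
      (balanced R K o i -> lL = lQ) &
      (B_connected K i -> (lL = lQ <-> balanced R K o i))].
Proof.
have p1 := part1 hw hL hQ.
have p2 := part2 hw hL hQ.
have p3 := part3 hw hL hQ.
split => //.
- by move=> hb; apply: le_anti; rewrite p1 p2.
- move=> hc; split; first exact: p3.
  by move=> hb; apply: le_anti; rewrite p1 p2.
Qed.
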